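(* Let $n_\text{in}\ge1$, $n_\text{out}\in\{2,3\}$, $\mathbf{W}\in\mathbb{R}^{n_\text{out}\times n_\text{in}}$, $\mathbf{b}\in\mathbb{R}^{n_\text{out}}$, $\mathbf{c}\in\mathbb{R}^{n_\text{in}}$, $\mathbf{U}=[\mathbf{u}_1\,\ldots\,\mathbf{u}_{n_\text{in}}]\in\mathbb{R}^{n_\text{in}\times n_\text{in}}$. For $r\in[0,1]$ let $\mathcal{P}(\mathbf{U})=\{\mathbf{c}+\sum_j\lambda_j\mathbf{u}_j:\lambda\in[0,1]^{n_\text{in}}\}$, $\mathcal{P}(\mathbf{U}^L_r)=\{\mathbf{c}+\lambda_1 r\mathbf{u}_1+\sum_{j\ge2}\lambda_j\mathbf{u}_j:\lambda\in[0,1]^{n_\text{in}}\}$, $\mathcal{P}(\mathbf{U}^R_r)=\{\mathbf{c}+r\mathbf{u}_1+\lambda_1(1-r)\mathbf{u}_1+\sum_{j\ge2}\lambda_j\mathbf{u}_j:\lambda\in[0,1]^{n_\text{in}}\}$, let $\mathcal{P}(\mathbf{V}),\mathcal{P}(\mathbf{V}^L_r),\mathcal{P}(\mathbf{V}^R_r)$ be their images under $\mathbf{x}\mapsto\mathbf{W}\mathbf{x}+\mathbf{b}$, and define $V_\text{red}(r)=\mathrm{Vol}(\mathcal{B}(\mathbf{V}))-\mathrm{Vol}(\mathcal{B}(\mathbf{V}^L_r)\cup\mathcal{B}(\mathbf{V}^R_r))$. Then $r=\tfrac12$ maximizes $V_\text{red}(r)$ over $r\in[0,1]$.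
   Context: For a parallelotope $\mathcal{P}\subset\mathbb{R}^{n_\text{out}}$, $\mathcal{B}(\cdot)$ denotes the smallest axis-aligned hyperrectangle containing it (the Cartesian product over coordinates of the interval between the minimal and maximal coordinate of its vertices); $\mathrm{Vol}$ is $n_\text{out}$-dimensional Lebesgue volume. *)

(* Defs.v *)
From HB Require Import structures.
From mathcomp Require Import all_boot all_order all_algebra.
From mathcomp Require Import all_classical all_reals all_analysis.
Set Implicit Arguments. Unset Strict Implicit. Unset Printing Implicit Defensive.
Import Order.TTheory GRing.Theory Num.Theory.
Local Open Scope classical_set_scope.
Local Open Scope ring_scope.

Section Defs.
Variable R : realType.

Definition leb2 := ((@lebesgue_measure R) \x (@lebesgue_measure R))%E.
Definition leb3 := (leb2 \x (@lebesgue_measure R))%E.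

(* n-dimensional Lebesgue volume of a set of column vectors, for n in {2,3}
   (set to 0 for other n, never used). *)
Definition Vol (n : nat) : set 'cV[R]_n -> \bar R :=
  match n return set 'cV[R]_n -> \bar R with
  | 2 => fun S => leb2 [set p : R * R | S (\col_(i < 2) [:: p.1; p.2]`_i)]
  | 3 => fun S => leb3 [set p : (R * R) * R |
                         S (\col_(i < 3) [:: p.1.1; p.1.2; p.2]`_i)]
  | _ => fun _ => 0%E
  end.

(* Vertices of the parallelotope {c + sum_j lambda_j G_j : lambda in [0,1]^k}
   (G_j the j-th column of G), indexed by lambda in {0,1}^k. *)
Definition ptope_vertex (m k : nat) (c : 'cV[R]_m) (G : 'M[R]_(m, k))
  (l : {ffun 'I_k -> bool}) : 'cV[R]_m :=
  c + \sum_(j < k) (l j)%:R *: col j G.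

Definition vmin (m k : nat) (vert : {ffun 'I_k -> bool} -> 'cV[R]_m) (i : 'I_m) : R :=
  \big[Num.min/vert [ffun=> false] i ord0]_(l : {ffun 'I_k -> bool}) vert l i ord0.
Definition vmax (m k : nat) (vert : {ffun 'I_k -> bool} -> 'cV[R]_m) (i : 'I_m) : R :=
  \big[Num.max/vert [ffun=> false] i ord0]_(l : {ffun 'I_k -> bool}) vert l i ord0.
Definition bbox (m k : nat) (vert : {ffun 'I_k -> bool} -> 'cV[R]_m) : set 'cV[R]_m :=
  [set y | forall i : 'I_m, vmin vert i <= y i ord0 <= vmax vert i].

(* U^L_r / U^R_r generators: first column u_1 (index ord0) scaled by s. *)
Definition scale_first (k : nat) (U : 'M[R]_k.+1) (s : R) : 'M[R]_k.+1 :=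
  \matrix_(i, j) (if j == ord0 then s * U i j else U i j).

Definition img_vertex (nout k : nat) (W : 'M[R]_(nout, k)) (b : 'cV[R]_nout)
  (c : 'cV[R]_k) (G : 'M[R]_k) (l : {ffun 'I_k -> bool}) : 'cV[R]_nout :=
  W *m ptope_vertex c G l + b.

Definition Vred (nout k : nat) (W : 'M[R]_(nout, k.+1)) (b : 'cV[R]_nout)
  (c : 'cV[R]_k.+1) (U : 'M[R]_k.+1) (r : R) : \bar R :=
  (Vol (bbox (img_vertex W b c U))
   - Vol (bbox (img_vertex W b c (scale_first U r))
          `|` bbox (img_vertex W b (c + r *: col ord0 U) (scale_first U (1 - r)))))%E.

End Defs.

(* Main.v *)
Require Import Defs.
From HB Require Import structures.
From mathcomp Require Import all_boot all_order all_algebra.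
From mathcomp Require Import all_classical all_reals all_analysis.
Import Order.TTheory GRing.Theory Num.Theory.
From mathcomp Require Import ring lra.
Local Open Scope ring_scope.
Local Open Scope classical_set_scope.

Section H.
Variable R : realType.

Lemma img_vertexE (n k : nat) (W : 'M[R]_(n,k)) b c (G : 'M[R]_k) l i :
  img_vertex W b c G l i ord0 =
  (W *m c + b) i ord0 + \sum_(j < k) (l j)%:R * (W *m G) i j.
Proof.
rewrite /img_vertex /ptope_vertex mulmxDr mulmx_sumr !mxE summxE.
rewrite [in LHS]addrAC; congr (_ + _).
apply: eq_bigr => j _.
rewrite -scalemxAr !mxE; congr (_ * _); apply: eq_bigr => m _; rewrite !mxE //.
Qed.

Lemma vmin_img (n k : nat) (W : 'M[R]_(n,k)) b c (G : 'M[R]_k) i :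
  vmin (img_vertex W b c G) i =
  (W *m c + b) i ord0 + \sum_(j < k) Num.min 0 ((W *m G) i j).
Proof.
set m := _ + _.
apply/eqP; rewrite eq_le; apply/andP; split.
  pose ls := [ffun j => (W *m G) i j < 0].
  rewrite /vmin (bigD1 ls) //= ge_min; apply/orP; left.
  rewrite img_vertexE /m lerD2l; apply: ler_sum => j _.
  by rewrite ffunE; case: ltrP => h; rewrite /= ?mul1r ?mul0r.
rewrite /vmin; apply: (big_ind (fun v => m <= v)).
- rewrite img_vertexE /m lerD2l; apply: ler_sum => j _.
  by rewrite ffunE mul0r ge_min lexx.
- by move=> x y hx hy; rewrite le_min hx hy.
- move=> l _; rewrite img_vertexE /m lerD2l; apply: ler_sum => j _.
  case: (l j); rewrite ?mul1r ?mul0r ge_min lexx ?orbT //.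
Qed.

Lemma vmax_img (n k : nat) (W : 'M[R]_(n,k)) b c (G : 'M[R]_k) i :
  vmax (img_vertex W b c G) i =
  (W *m c + b) i ord0 + \sum_(j < k) Num.max 0 ((W *m G) i j).
Proof.
set m := _ + _.
apply/eqP; rewrite eq_le; apply/andP; split; last first.
  pose ls := [ffun j => 0 < (W *m G) i j].
  rewrite /vmax (bigD1 ls) //= le_max; apply/orP; left.
  rewrite img_vertexE /m lerD2l; apply: ler_sum => j _.
  by rewrite ffunE; case: ltrP => h; rewrite /= ?mul1r ?mul0r.
rewrite /vmax; apply: (big_ind (fun v => v <= m)).
- rewrite img_vertexE /m lerD2l; apply: ler_sum => j _.
  by rewrite ffunE mul0r le_max lexx.
- by move=> x y hx hy; rewrite ge_max hx hy.
- move=> l _; rewrite img_vertexE /m lerD2l; apply: ler_sum => j _.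
  case: (l j); rewrite ?mul1r ?mul0r le_max lexx ?orbT //.
Qed.


Lemma leb_itv (a b : R) : a <= b -> lebesgue_measure `[a, b] = (b - a)%:E.
Proof.
move=> h; rewrite lebesgue_measure_itv /= lte_fin.
by case: ltgtP h => //= -> _; rewrite subrr.
Qed.

Definition box {n} (lo hi : 'I_n -> R) : set 'cV[R]_n :=
  [set y | forall i, lo i <= y i ord0 <= hi i].

Lemma boxI n (lo1 hi1 lo2 hi2 : 'I_n -> R) :
  box lo1 hi1 `&` box lo2 hi2 =
  box (fun i => Num.max (lo1 i) (lo2 i)) (fun i => Num.min (hi1 i) (hi2 i)).
Proof.
rewrite predeqE => y; split.
  by move=> [h1 h2] i; move: (h1 i) (h2 i) => /andP[? ?] /andP[? ?];
    rewrite ge_max le_min; apply/and3P; split => //; apply/andP.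
move=> h; split => i; move: (h i); rewrite ge_max le_min => /andP[/andP[? ?] /andP[? ?]];
  by apply/andP.
Qed.

Definition pre2 (S : set 'cV[R]_2) : set (R * R) :=
  [set p | S (\col_(i < 2) [:: p.1; p.2]`_i)].

Lemma pre2_box lo hi : pre2 (box lo hi) =
  `[lo ord0, hi ord0] `*` `[lo ord_max, hi ord_max].
Proof.
rewrite predeqE => -[x y]; split.
  move=> h; have := h ord0; have := h ord_max.
  rewrite !mxE => h2 h1; split; [move: h1|move: h2];
  move=> hh; rewrite -[X in X _]/(mkset _) /mkset in_itv; exact: hh.
move=> [h1 h2].
have h1' : lo ord0 <= x <= hi ord0 by move: h1; rewrite -[X in X _ -> _]/(mkset _) /mkset in_itv.
have h2' : lo ord_max <= y <= hi ord_max by move: h2; rewrite -[X in X _ -> _]/(mkset _) /mkset in_itv.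
move=> i; rewrite mxE; case: i => [[|[|m]] Hi].
- by rewrite (_ : Ordinal Hi = ord0); last exact: val_inj.
- by rewrite (_ : Ordinal Hi = ord_max); last exact: val_inj.
- by [].
Qed.

Lemma vol2_box (lo hi : 'I_2 -> R) : (forall i, lo i <= hi i) ->
  Vol (box lo hi) = ((hi ord0 - lo ord0) * (hi ord_max - lo ord_max))%:E.
Proof.
move=> h.
rewrite [LHS](_ : _ = leb2 (pre2 (box lo hi))) // pre2_box /leb2.
rewrite product_measure1E; try exact: measurable_itv.
transitivity ((hi ord0 - lo ord0)%:E * (hi ord_max - lo ord_max)%:E)%E; last by rewrite EFinM.
by congr (_ * _)%E; apply: leb_itv.
Qed.

Lemma vol2U (lo1 hi1 lo2 hi2 : 'I_2 -> R) :
  (forall i, lo1 i <= hi1 i) -> (forall i, lo2 i <= hi2 i) ->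
  (forall i, Num.max (lo1 i) (lo2 i) <= Num.min (hi1 i) (hi2 i)) ->
  Vol (box lo1 hi1 `|` box lo2 hi2) =
  (Vol (box lo1 hi1) + Vol (box lo2 hi2)
   - Vol (box (fun i => Num.max (lo1 i) (lo2 i)) (fun i => Num.min (hi1 i) (hi2 i))))%E.
Proof.
move=> h1 h2 h3.
rewrite [LHS](_ : _ = leb2 (pre2 (box lo1 hi1) `|` pre2 (box lo2 hi2))) //.
rewrite /leb2 measureUfinl.
- rewrite (_ : pre2 _ `&` pre2 _ = pre2 (box (fun i => Num.max (lo1 i) (lo2 i))
     (fun i => Num.min (hi1 i) (hi2 i)))) //.
  by rewrite -boxI.
- by rewrite pre2_box; apply: measurableX; exact: measurable_itv.
- by rewrite pre2_box; apply: measurableX; exact: measurable_itv.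
- by rewrite [X in (X < _)%E](_ : _ = Vol (box lo1 hi1)) // vol2_box // ltry.
Qed.


Definition i1 : 'I_3 := @Ordinal 3 1 isT.

Definition pre3 (S : set 'cV[R]_3) : set ((R * R) * R) :=
  [set p | S (\col_(i < 3) [:: p.1.1; p.1.2; p.2]`_i)].

Lemma pre3_box lo hi : pre3 (box lo hi) =
  (`[lo ord0, hi ord0] `*` `[lo i1, hi i1]) `*` `[lo ord_max, hi ord_max].
Proof.
rewrite predeqE => -[[x y] z]; split.
  move=> h; have := h ord0; have := h i1; have := h ord_max.
  rewrite !mxE => h3 h2 h1; split; [split|]; [move: h1|move: h2|move: h3];
  move=> hh; rewrite -[X in X _]/(mkset _) /mkset in_itv; exact: hh.
move=> [[h1 h2] h3].
have h1' : lo ord0 <= x <= hi ord0 by move: h1; rewrite -[X in X _ -> _]/(mkset _) /mkset in_itv.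
have h2' : lo i1 <= y <= hi i1 by move: h2; rewrite -[X in X _ -> _]/(mkset _) /mkset in_itv.
have h3' : lo ord_max <= z <= hi ord_max by move: h3; rewrite -[X in X _ -> _]/(mkset _) /mkset in_itv.
move=> i; rewrite mxE; case: i => [[|[|[|m]]] Hi].
- by rewrite (_ : Ordinal Hi = ord0); last exact: val_inj.
- by rewrite (_ : Ordinal Hi = i1); last exact: val_inj.
- by rewrite (_ : Ordinal Hi = ord_max); last exact: val_inj.
- by [].
Qed.

Lemma pre3_meas lo hi : measurable (pre3 (box lo hi)).
Proof. by rewrite pre3_box; apply: measurableX; [apply: measurableX|]; exact: measurable_itv. Qed.

Lemma vol3_box (lo hi : 'I_3 -> R) : (forall i, lo i <= hi i) ->
  Vol (box lo hi) = ((hi ord0 - lo ord0) * (hi i1 - lo i1) * (hi ord_max - lo ord_max))%:E.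
Proof.
move=> h.
rewrite [LHS](_ : _ = leb3 (pre3 (box lo hi))) // pre3_box /leb3.
rewrite product_measure1E; last exact: measurable_itv; last first.
  by apply: measurableX; exact: measurable_itv.
have E : leb2 (`[lo ord0, hi ord0] `*` `[lo i1, hi i1]) =
    ((hi ord0 - lo ord0) * (hi i1 - lo i1))%:E.
  rewrite /leb2 product_measure1E; try exact: measurable_itv.
  transitivity ((hi ord0 - lo ord0)%:E * (hi i1 - lo i1)%:E)%E; last by rewrite EFinM.
  by congr (_ * _)%E; apply: leb_itv.
transitivity (((hi ord0 - lo ord0) * (hi i1 - lo i1))%:E * (hi ord_max - lo ord_max)%:E)%E; last by rewrite !EFinM.
by congr (_ * _)%E; [exact: E|apply: leb_itv].
Qed.

Lemma vol3U (lo1 hi1 lo2 hi2 : 'I_3 -> R) :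
  (forall i, lo1 i <= hi1 i) ->
  Vol (box lo1 hi1 `|` box lo2 hi2) =
  (Vol (box lo1 hi1) + Vol (box lo2 hi2)
   - Vol (box (fun i => Num.max (lo1 i) (lo2 i)) (fun i => Num.min (hi1 i) (hi2 i))))%E.
Proof.
move=> h1.
rewrite [LHS](_ : _ = leb3 (pre3 (box lo1 hi1) `|` pre3 (box lo2 hi2))) //.
rewrite /leb3 measureUfinl.
- rewrite (_ : pre3 _ `&` pre3 _ = pre3 (box (fun i => Num.max (lo1 i) (lo2 i))
     (fun i => Num.min (hi1 i) (hi2 i)))) //.
  by rewrite -boxI.
- exact: pre3_meas.
- exact: pre3_meas.
- by rewrite [X in (X < _)%E](_ : _ = Vol (box lo1 hi1)) // vol3_box // ltry.
Qed.


Section Coord.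
Variables (n k : nat) (W : 'M[R]_(n,k.+1)) (b : 'cV[R]_n) (c : 'cV[R]_k.+1) (U : 'M[R]_k.+1).
Definition aa i := (W *m U) i ord0.
Definition dd i := (W *m c + b) i ord0.
Definition mm i := \sum_(j < k) Num.min 0 ((W *m U) i (lift ord0 j)).
Definition MM i := \sum_(j < k) Num.max 0 ((W *m U) i (lift ord0 j)).
Definition lo s t i := dd i + t * aa i + (Num.min 0 (s * aa i) + mm i).
Definition hi s t i := dd i + t * aa i + (Num.max 0 (s * aa i) + MM i).

Lemma WS s i j : (W *m scale_first U s) i j = if j == ord0 then s * (W *m U) i j else (W *m U) i j.
Proof.
rewrite /scale_first !mxE; under eq_bigr => l _ do rewrite mxE; case: (j == ord0) => //.
by rewrite mulr_sumr; apply: eq_bigr => l _; rewrite mulrCA.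
Qed.

Lemma shiftE t i : (W *m (c + t *: col ord0 U) + b) i ord0 = dd i + t * aa i.
Proof.
rewrite mulmxDr -scalemxAr /dd /aa !mxE addrAC; congr (_ + _ * _).
by apply: eq_bigr => l _; rewrite mxE.
Qed.

Lemma bboxG s t : bbox (img_vertex W b (c + t *: col ord0 U) (scale_first U s)) = box (lo s t) (hi s t).
Proof.
have e1 : vmin (img_vertex W b (c + t *: col ord0 U) (scale_first U s)) = lo s t.
  apply: funext => i; rewrite vmin_img shiftE big_ord_recl /lo /mm !WS eqxx.
  by congr (_ + (_ + _)); apply: eq_bigr => j _; rewrite WS.
have e2 : vmax (img_vertex W b (c + t *: col ord0 U) (scale_first U s)) = hi s t.
  apply: funext => i; rewrite vmax_img shiftE big_ord_recl /hi /MM !WS eqxx.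
  by congr (_ + (_ + _)); apply: eq_bigr => j _; rewrite WS.
by rewrite /bbox e1 e2.
Qed.

Lemma maxmin0 (x : R) : Num.max 0 x - Num.min 0 x = `|x|.
Proof.
case: (lerP 0 x) => h.
  by rewrite subr0 ger0_norm.
by rewrite sub0r ltr0_norm.
Qed.

Lemma len s t i : 0 <= s -> hi s t i - lo s t i = (MM i - mm i) + s * `|aa i|.
Proof.
move=> hs; have h := maxmin0 (s * aa i); rewrite normrM (ger0_norm hs) in h.
rewrite /hi /lo; lra.
Qed.

Lemma SS i : mm i <= MM i.
Proof.
apply: ler_sum => j _; apply: (@le_trans _ _ 0); first by rewrite ge_min lexx.
by rewrite le_max lexx.
Qed.

Lemma maxlo r i : 0 <= r <= 1 ->
  Num.max (lo r 0 i) (lo (1 - r) r i) = dd i + r * aa i + mm i.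
Proof.
move=> /andP[h0 h1]; have h1' : 0 <= 1 - r by lra.
rewrite /lo; case: (lerP 0 (aa i)) => ha.
  have e1 := mulr_ge0 h0 ha; have e2 := mulr_ge0 h1' ha.
  rewrite (min_l e1) (min_l e2) max_r; first lra.
  lra.
have e1 : r * aa i <= 0 by rewrite mulr_ge0_le0 // ltW.
have e2 : (1 - r) * aa i <= 0 by rewrite mulr_ge0_le0 // ltW.
rewrite (min_r e1) (min_r e2) max_l; first lra.
lra.
Qed.

Lemma minhi r i : 0 <= r <= 1 ->
  Num.min (hi r 0 i) (hi (1 - r) r i) = dd i + r * aa i + MM i.
Proof.
move=> /andP[h0 h1]; have h1' : 0 <= 1 - r by lra.
rewrite /hi; case: (lerP 0 (aa i)) => ha.
  have e1 := mulr_ge0 h0 ha; have e2 := mulr_ge0 h1' ha.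
  rewrite (max_r e1) (max_r e2) min_l; first lra.
  lra.
have e1 : r * aa i <= 0 by rewrite mulr_ge0_le0 // ltW.
have e2 : (1 - r) * aa i <= 0 by rewrite mulr_ge0_le0 // ltW.
rewrite (max_l e1) (max_l e2) min_r; first lra.
lra.
Qed.

Lemma lohi s t i : 0 <= s -> lo s t i <= hi s t i.
Proof.
move=> hs; have := len s t i hs; have := SS i.
have := mulr_ge0 hs (normr_ge0 (aa i)); lra.
Qed.

Lemma scale_first1 : scale_first U 1 = U.
Proof. by apply/matrixP => i j; rewrite mxE; case: ifP; rewrite ?mul1r. Qed.

Lemma Vred_box r : Vred W b c U r =
  (Vol (box (lo 1 0) (hi 1 0)) - Vol (box (lo r 0) (hi r 0) `|` box (lo (1-r) r) (hi (1-r) r)))%E.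
Proof.
have e0 : c = c + 0 *: col ord0 U by rewrite scale0r addr0.
rewrite /Vred -bboxG -bboxG -bboxG scale_first1 -e0 //.
Qed.

End Coord.
Arguments aa {n k}. Arguments dd {n k}. Arguments mm {n k}. Arguments MM {n k}.
Arguments lo {n k}. Arguments hi {n k}. Arguments SS {n k}.

Lemma Vred2E k (W : 'M[R]_(2, k.+1)) b c U r : 0 <= r <= 1 ->
  Vred W b c U r =
  (((MM W U ord0 - mm W U ord0) + `|aa W U ord0|) * ((MM W U ord_max - mm W U ord_max) + `|aa W U ord_max|)
  - (((MM W U ord0 - mm W U ord0) + r * `|aa W U ord0|) * ((MM W U ord_max - mm W U ord_max) + r * `|aa W U ord_max|)
    + ((MM W U ord0 - mm W U ord0) + (1 - r) * `|aa W U ord0|) * ((MM W U ord_max - mm W U ord_max) + (1 - r) * `|aa W U ord_max|)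
    - (MM W U ord0 - mm W U ord0) * (MM W U ord_max - mm W U ord_max)))%:E.
Proof.
move=> hr; have /andP[h0 h1] := hr; have h1' : 0 <= 1 - r by lra.
have side : forall i, Num.max (lo W b c U r 0 i) (lo W b c U (1 - r) r i) <=
    Num.min (hi W b c U r 0 i) (hi W b c U (1 - r) r i).
  by move=> i; rewrite maxlo // minhi //; have := SS W U i; lra.
rewrite Vred_box vol2U; [|by move=> i; apply: lohi..|exact: side].
rewrite !vol2_box; try (by move=> i; apply: lohi); try exact: side.
rewrite !maxlo // !minhi // !len // ?ler01 // mul1r.
rewrite -EFinD; congr EFin; ring.
Qed.



Lemma final2 (S0 S1 a0 a1 r : R) : 0 <= a0 -> 0 <= a1 ->
  (S0 + a0) * (S1 + a1) - ((S0 + r * a0) * (S1 + r * a1) + (S0 + (1 - r) * a0) * (S1 + (1 - r) * a1) - S0 * S1)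
  <= (S0 + a0) * (S1 + a1) - ((S0 + 1/2 * a0) * (S1 + 1/2 * a1) + (S0 + (1 - 1/2) * a0) * (S1 + (1 - 1/2) * a1) - S0 * S1).
Proof.
move=> h0 h1.
have key : 0 <= a0 * a1 * (r - 1/2) ^+ 2 by apply: mulr_ge0; [apply: mulr_ge0|apply: sqr_ge0].
rewrite -subr_ge0.
have -> : (S0 + a0) * (S1 + a1) - ((S0 + 1/2 * a0) * (S1 + 1/2 * a1) + (S0 + (1 - 1/2) * a0) * (S1 + (1 - 1/2) * a1) - S0 * S1) - ((S0 + a0) * (S1 + a1) - ((S0 + r * a0) * (S1 + r * a1) + (S0 + (1 - r) * a0) * (S1 + (1 - r) * a1) - S0 * S1)) = 2 * (a0 * a1 * (r - 1/2) ^+ 2).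
  by field.
by rewrite mulr_ge0.
Qed.

Definition p3 (S0 S1 S2 a0 a1 a2 r : R) := (S0 + r * a0) * (S1 + r * a1) * (S2 + r * a2).

Lemma final3 (S0 S1 S2 a0 a1 a2 r : R) : 0 <= S0 -> 0 <= S1 -> 0 <= S2 ->
  0 <= a0 -> 0 <= a1 -> 0 <= a2 ->
  p3 S0 S1 S2 a0 a1 a2 1 - (p3 S0 S1 S2 a0 a1 a2 r + p3 S0 S1 S2 a0 a1 a2 (1 - r) - p3 S0 S1 S2 a0 a1 a2 0)
  <= p3 S0 S1 S2 a0 a1 a2 1 - (p3 S0 S1 S2 a0 a1 a2 (1/2) + p3 S0 S1 S2 a0 a1 a2 (1 - 1/2) - p3 S0 S1 S2 a0 a1 a2 0).
Proof.
move=> hS0 hS1 hS2 h0 h1 h2.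
have hQ : 0 <= S0 * a1 * a2 + S1 * a0 * a2 + S2 * a0 * a1.
  by rewrite !addr_ge0 // !mulr_ge0.
have hP : 0 <= a0 * a1 * a2 by rewrite !mulr_ge0.
have hs := sqr_ge0 (r - 1/2).
rewrite -subr_ge0 /p3.
have -> : forall x y : R, x - y = x - y by [].
set Q := S0 * a1 * a2 + S1 * a0 * a2 + S2 * a0 * a1.
set P := a0 * a1 * a2.
have E : (S0 + 1 * a0) * (S1 + 1 * a1) * (S2 + 1 * a2) -
   ((S0 + 1 / 2 * a0) * (S1 + 1 / 2 * a1) * (S2 + 1 / 2 * a2) +
    (S0 + (1 - 1 / 2) * a0) * (S1 + (1 - 1 / 2) * a1) * (S2 + (1 - 1 / 2) * a2) -
    (S0 + 0 * a0) * (S1 + 0 * a1) * (S2 + 0 * a2)) -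
   ((S0 + 1 * a0) * (S1 + 1 * a1) * (S2 + 1 * a2) -
    ((S0 + r * a0) * (S1 + r * a1) * (S2 + r * a2) +
     (S0 + (1 - r) * a0) * (S1 + (1 - r) * a1) * (S2 + (1 - r) * a2) -
     (S0 + 0 * a0) * (S1 + 0 * a1) * (S2 + 0 * a2))) = (2 * Q + 3 * P) * (r - 1/2) ^+ 2.
  by rewrite /Q /P; field.
rewrite E; apply: mulr_ge0 => //.
by apply: addr_ge0; apply: mulr_ge0.
Qed.

Lemma Vred3E k (W : 'M[R]_(3, k.+1)) b c U r : 0 <= r <= 1 ->
  let S i := MM W U i - mm W U i in let a i := `|aa W U i| in
  Vred W b c U r =
  (p3 (S ord0) (S i1) (S ord_max) (a ord0) (a i1) (a ord_max) 1
   - (p3 (S ord0) (S i1) (S ord_max) (a ord0) (a i1) (a ord_max) r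
      + p3 (S ord0) (S i1) (S ord_max) (a ord0) (a i1) (a ord_max) (1 - r)
      - p3 (S ord0) (S i1) (S ord_max) (a ord0) (a i1) (a ord_max) 0))%:E.
Proof.
move=> hr S a; have /andP[h0 h1] := hr; have h1' : 0 <= 1 - r by lra.
have side : forall i, Num.max (lo W b c U r 0 i) (lo W b c U (1 - r) r i) <=
    Num.min (hi W b c U r 0 i) (hi W b c U (1 - r) r i).
  by move=> i; rewrite maxlo // minhi //; have := SS W U i; lra.
rewrite Vred_box vol3U; last by move=> i; apply: lohi.
rewrite !vol3_box; try (by move=> i; apply: lohi); try exact: side.
rewrite !maxlo // !minhi // !len // ?ler01 //.
rewrite -EFinD; congr EFin; rewrite /p3 /S /a; ring.
Qed.

End H.

Theorem corollary2 (R : realType) (nin nout : nat) (hnin : (1 <= nin)%N)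
  (hnout : nout = 2%N \/ nout = 3%N)
  (W : 'M[R]_(nout, nin.-1.+1)) (b : 'cV[R]_nout) (c : 'cV[R]_nin.-1.+1)
  (U : 'M[R]_nin.-1.+1) :
  forall r : R, 0 <= r <= 1 ->
    (Vred W b c U r <= Vred W b c U (1 / 2))%E.
Proof.
move=> r hr.
have hh : ((0:R) <= 1 / 2) && (1 / 2 <= (1:R)) by apply/andP; split; lra.
case: hnout => ?; subst nout.
- rewrite Vred2E // Vred2E // lee_fin.
  by apply: final2; exact: normr_ge0.
- rewrite Vred3E // Vred3E // lee_fin.
  by apply: final3; rewrite ?normr_ge0 // subr_ge0 SS.
Qed.
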